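(* Let $\mathcal{D}$ be the set of $d\times d$ density matrices. For $u\in\mathbb{R}$, $\mu\in\{1,\ldots,m\}$ let $M_\mu^u\in\mathbb{C}^{d\times d}$ with $\sum_\mu(M_\mu^u)^\dagger M_\mu^u=\mathrm{I}$, such that (A1) $M_\mu^0=\sum_nc_{\mu,n}|n\rangle\langle n|$ in a fixed orthonormal basis $\{|n\rangle\}$; (A2) for all $n_1\neq n_2$ there is $\mu$ with $|c_{\mu,n_1}|^2\neq|c_{\mu,n_2}|^2$; (A3) each $u\mapsto M_\mu^u$ is $C^2$. For $(\rho,\beta)\in\mathcal{D}\times\mathbb{R}$ let $p_\mu=\mathrm{tr}(M_\mu^\beta\rho(M_\mu^\beta)^\dagger)$, $a_{\mu,n}=\langle n|M_\mu^\beta\rho(M_\mu^\beta)^\dagger|n\rangle$, and $$Q_1(\rho,\beta)=\sum_{n}\sum_{\mu,\nu:\,p_\mu p_\nu>0}\frac{p_\mu p_\nu}{4}\Big(\frac{a_{\mu,n}}{p_\mu}-\frac{a_{\nu,n}}{p_\nu}\Big)^2.$$ Let $\tilde u>0$. Then there exists $C>0$ such that for all $(\rho,\beta)\in\mathcal{D}\times[-\tilde u,\tilde u]$ with $Q_1(\rho,\beta)=0$, there exists $n\in\{1,\ldots,d\}$ with $\langle n|\rho|n\rangle\ge1-C|\beta|$. *)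

(* Defs.v *)
From HB Require Import structures.
From mathcomp Require Import all_boot all_order all_algebra.
From mathcomp Require Import all_classical all_reals.
From mathcomp Require Import topology normedtype derive.
From mathcomp Require Import complex.
Set Implicit Arguments. Unset Strict Implicit. Unset Printing Implicit Defensive.
Import Order.TTheory GRing.Theory Num.Theory.
Import numFieldNormedType.Exports.
Local Open Scope ring_scope.

Definition adjmx (R : realType) (p q : nat) (A : 'M[R[i]]_(p, q)) : 'M[R[i]]_(q, p) :=
  (map_mx Num.conj A)^T.

Definition braket (R : realType) (d : nat) (v : 'cV[R[i]]_d) (X : 'M[R[i]]_d) : R[i] :=
  (adjmx v *m X *m v) 0 0.

Definition density (R : realType) (d : nat) (rho : 'M[R[i]]_d) : Prop :=
  [/\ adjmx rho = rho,
      (forall v : 'cV[R[i]]_d, 0 <= braket v rho)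
    & \tr rho = 1].

Definition C2 (R : realType) (f : R -> R) : Prop :=
  [/\ (forall x, derivable f x 1),
      (forall x, derivable (derive1 f) x 1)
    & continuous (derive1n 2 f)].

Definition C2mx (R : realType) (d : nat) (F : R -> 'M[R[i]]_d) : Prop :=
  forall i j : 'I_d, C2 (fun u => complex.Re (F u i j)) /\ C2 (fun u => complex.Im (F u i j)).

Definition pr (R : realType) (d m : nat) (M : 'I_m -> R -> 'M[R[i]]_d)
  (rho : 'M[R[i]]_d) (beta : R) (mu : 'I_m) : R[i] :=
  \tr (M mu beta *m rho *m adjmx (M mu beta)).

(* a_{mu,n} = <n| M rho M^dagger |n>, with |n> = n-th column of U *)
Definition amp (R : realType) (d m : nat) (U : 'M[R[i]]_d) (M : 'I_m -> R -> 'M[R[i]]_d)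
  (rho : 'M[R[i]]_d) (beta : R) (mu : 'I_m) (n : 'I_d) : R[i] :=
  braket (col n U) (M mu beta *m rho *m adjmx (M mu beta)).

Definition Q1 (R : realType) (d m : nat) (U : 'M[R[i]]_d) (M : 'I_m -> R -> 'M[R[i]]_d)
  (rho : 'M[R[i]]_d) (beta : R) : R[i] :=
  \sum_(n < d) \sum_(mu < m) \sum_(nu < m | 0 < pr M rho beta mu * pr M rho beta nu)
    (pr M rho beta mu * pr M rho beta nu / 4) *
    (amp U M rho beta mu n / pr M rho beta mu - amp U M rho beta nu n / pr M rho beta nu) ^+ 2.

(* Main.v *)
Require Import Defs.
From HB Require Import structures.
From mathcomp Require Import all_boot all_order all_algebra.
From mathcomp Require Import all_classical all_reals.
From mathcomp Require Import topology normedtype derive realfun.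
From mathcomp Require Import complex.
From mathcomp Require Import ring lra.
Import Order.TTheory GRing.Theory Num.Theory.
Import numFieldNormedType.Exports.
Set Implicit Arguments. Unset Strict Implicit. Unset Printing Implicit Defensive.
Local Open Scope ring_scope.
Local Open Scope complex_scope.
Section MN.
Variable K : numDomainType.
Definition mn (p q : nat) (A : 'M[K]_(p, q)) : K := \sum_i \sum_j `|A i j|.
Lemma mn_ge0 p q (A : 'M[K]_(p,q)) : 0 <= mn A.
Proof. by apply: sumr_ge0 => i _; apply: sumr_ge0. Qed.
Lemma mn_entry p q (A : 'M[K]_(p,q)) i j : `|A i j| <= mn A.
Proof.
rewrite /mn (bigD1 i) //= (bigD1 j) //= -addrA; rewrite lerDl addr_ge0 //.
  by apply: sumr_ge0.
by apply: sumr_ge0 => ? _; apply: sumr_ge0.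
Qed.
Lemma mnD p q (A B : 'M[K]_(p,q)) : mn (A + B) <= mn A + mn B.
Proof.
rewrite /mn -big_split /=; apply: ler_sum => i _; rewrite -big_split /=.
by apply: ler_sum => j _; rewrite mxE ler_normD.
Qed.
Lemma mnN p q (A : 'M[K]_(p,q)) : mn (- A) = mn A.
Proof. by apply: eq_bigr => i _; apply: eq_bigr => j _; rewrite mxE normrN. Qed.
Lemma mnB p q (A B : 'M[K]_(p,q)) : mn (A - B) <= mn A + mn B.
Proof. by rewrite -(mnN B) mnD. Qed.
Lemma mnZ p q a (A : 'M[K]_(p,q)) : mn (a *: A) = `|a| * mn A.
Proof.
rewrite /mn mulr_sumr; apply: eq_bigr => i _; rewrite mulr_sumr.
by apply: eq_bigr => j _; rewrite mxE normrM.
Qed.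
Lemma mnM p q r (A : 'M[K]_(p,q)) (B : 'M[K]_(q,r)) : mn (A *m B) <= mn A * mn B.
Proof.
rewrite /mn mulr_suml.
apply: (@le_trans _ _ (\sum_i \sum_k \sum_j `|A i k| * `|B k j|)).
  apply: ler_sum => i _.
  rewrite exchange_big /=; apply: ler_sum => j _; rewrite mxE.
  by apply: (le_trans (ler_norm_sum _ _ _)); apply: ler_sum => k _; rewrite normrM.
apply: ler_sum => i _; rewrite mulr_suml; apply: ler_sum => k _.
rewrite mulr_sumr (bigD1 k) //= mulr_sumr lerDl.
apply: sumr_ge0 => k' _; rewrite mulr_sumr; apply: sumr_ge0 => j _.
by rewrite mulr_ge0.
Qed.
End MN.
Section Adj.
Variable R : realType.
Implicit Types (a : R[i]).
Lemma adjmxD p q (A B : 'M[R[i]]_(p,q)) : adjmx (A + B) = adjmx A + adjmx B.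
Proof. by rewrite /adjmx map_mxD linearD. Qed.
Lemma adjmxN p q (A : 'M[R[i]]_(p,q)) : adjmx (- A) = - adjmx A.
Proof. by rewrite /adjmx map_mxN linearN. Qed.
Lemma adjmxB p q (A B : 'M[R[i]]_(p,q)) : adjmx (A - B) = adjmx A - adjmx B.
Proof. by rewrite adjmxD adjmxN. Qed.
Lemma adjmxZ p q a (A : 'M[R[i]]_(p,q)) : adjmx (a *: A) = Num.conj a *: adjmx A.
Proof. by rewrite /adjmx map_mxZ linearZ. Qed.
Lemma adjmxM p q r (A : 'M[R[i]]_(p,q)) (B : 'M[R[i]]_(q,r)) :
  adjmx (A *m B) = adjmx B *m adjmx A.
Proof. by rewrite /adjmx map_mxM trmx_mul. Qed.
Lemma adjmxK p q (A : 'M[R[i]]_(p,q)) : adjmx (adjmx A) = A.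
Proof. by apply/matrixP => i j; rewrite /adjmx !mxE conjCK. Qed.
Lemma adjmx_sum p q (I : finType) (F : I -> 'M[R[i]]_(p,q)) :
  adjmx (\sum_i F i) = \sum_i adjmx (F i).
Proof. by apply/matrixP => i j; rewrite /adjmx !mxE !summxE rmorph_sum; apply: eq_bigr => k _; rewrite !mxE. Qed.
Lemma mn_adj p q (A : 'M[R[i]]_(p,q)) : mn (adjmx A) = mn A.
Proof.
rewrite /mn exchange_big; apply: eq_bigr => i _; apply: eq_bigr => j _.
by rewrite /adjmx !mxE norm_conjC.
Qed.
Lemma normRC (x : R) : `|x%:C| = `|x|%:C.
Proof. by rewrite normc_def /= expr0n /= addr0 sqrtr_sqr. Qed.
End Adj.
Section Br.
Variable R : realType.
Variable d : nat.
Implicit Types (v : 'cV[R[i]]_d) (X : 'M[R[i]]_d).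
Lemma braket_conj v X (A : 'M[R[i]]_d) :
  braket v (A *m X *m adjmx A) = braket (adjmx A *m v) X.
Proof. by rewrite /braket adjmxM adjmxK !mulmxA. Qed.
Lemma braketZ (a : R[i]) v X : braket (a *: v) X = Num.conj a * a * braket v X.
Proof. by rewrite /braket adjmxZ -!scalemxAl -scalemxAr !mxE mulrA. Qed.
Lemma braketD v X Y : braket v (X + Y) = braket v X + braket v Y.
Proof. by rewrite /braket mulmxDr mulmxDl mxE. Qed.
Lemma braket_sum v (I : finType) (F : I -> 'M[R[i]]_d) :
  braket v (\sum_i F i) = \sum_i braket v (F i).
Proof.
rewrite /braket mulmx_sumr mulmx_suml summxE; apply: eq_bigr => i _ //.
Qed.
Lemma rowcol_entry p q r (A : 'M[R[i]]_(p,q)) (B : 'M[R[i]]_(q,r)) i j :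
  (row i A *m col j B) 0 0 = (A *m B) i j.
Proof. by rewrite !mxE; apply: eq_bigr => k _; rewrite !mxE. Qed.
Lemma adj_col (U : 'M[R[i]]_d) n : adjmx (col n U) = row n (adjmx U).
Proof. by apply/matrixP => i j; rewrite /adjmx !mxE. Qed.
Lemma braket_col (U : 'M[R[i]]_d) n X : braket (col n U) X = (adjmx U *m X *m U) n n.
Proof. by rewrite /braket adj_col -row_mul rowcol_entry. Qed.
Variable U : 'M[R[i]]_d.
Hypothesis hU : adjmx U *m U = 1%:M.
Lemma hU' : U *m adjmx U = 1%:M.
Proof. exact: mulmx1C. Qed.
Lemma colU_orth j k : adjmx (col j U) *m col k U = ((j == k)%:R)%:M.
Proof.
apply/matrixP => a b; rewrite !ord1 adj_col rowcol_entry hU !mxE eqxx /=.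
by rewrite mulr1n.
Qed.
Lemma trace_braket X : \tr X = \sum_n braket (col n U) X.
Proof.
under eq_bigr do rewrite braket_col.
rewrite -[RHS]/(\tr (adjmx U *m X *m U)) mxtrace_mulC mulmxA hU' mul1mx //.
Qed.
Lemma braket_col1 n : braket (col n U) 1%:M = 1.
Proof. by rewrite braket_col mulmx1 hU mxE eqxx. Qed.
Variable c : 'I_d -> R[i].
Let D := \sum_(k < d) c k *: (col k U *m adjmx (col k U)).
Lemma D_col n : D *m col n U = c n *: col n U.
Proof.
rewrite /D mulmx_suml (bigD1 n) //= big1 ?addr0.
  by rewrite -scalemxAl -mulmxA colU_orth eqxx mul_mx_scalar scale1r.
move=> k hk; rewrite -scalemxAl -mulmxA colU_orth (negbTE hk).
by rewrite mul_mx_scalar !scale0r scaler0.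
Qed.
Lemma Dadj_col n : adjmx D *m col n U = Num.conj (c n) *: col n U.
Proof.
rewrite /D adjmx_sum mulmx_suml (bigD1 n) //= big1 ?addr0.
  by rewrite adjmxZ adjmxM adjmxK -scalemxAl -mulmxA colU_orth eqxx mul_mx_scalar scale1r.
move=> k hk; rewrite adjmxZ adjmxM adjmxK -scalemxAl -mulmxA colU_orth (negbTE hk).
by rewrite mul_mx_scalar !scale0r scaler0.
Qed.
End Br.
Section Dens.
Variable R : realType.
Variable d : nat.
Implicit Types (v : 'cV[R[i]]_d) (X : 'M[R[i]]_d).
Lemma braket_delta X j k : (adjmx (delta_mx j 0 : 'cV[R[i]]_d) *m X *m (delta_mx k 0 : 'cV[R[i]]_d)) 0 0 = X j k.
Proof.
have -> : adjmx (delta_mx j 0 : 'cV[R[i]]_d) = delta_mx 0 j.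
  apply/matrixP => a b; by rewrite /adjmx !mxE rmorph_nat andbC.
by rewrite -(rowE j X) -colE !mxE.
Qed.
Lemma braket_addv v w X : braket (v + w) X =
  braket v X + braket w X + (adjmx v *m X *m w) 0 0 + (adjmx w *m X *m v) 0 0.
Proof.
rewrite /braket adjmxD !mulmxDl !mulmxDr !mxE.
ring.
Qed.
Variable rho : 'M[R[i]]_d.
Hypothesis hrho : density rho.
Lemma diag_ge0 j : 0 <= rho j j.
Proof. by case: hrho => _ h _; rewrite -braket_delta; apply: h. Qed.
Lemma diag_le1 j : rho j j <= 1.
Proof.
case: hrho => _ _ <-; rewrite /mxtrace (bigD1 j) //= lerDl.
by apply: sumr_ge0 => k _; apply: diag_ge0.
Qed.
Lemma herm j k : rho k j = Num.conj (rho j k).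
Proof. by case: hrho => h _ _; rewrite -{1}h /adjmx !mxE. Qed.
Lemma entry_le1 j k : `|rho j k| <= 1.
Proof.
have [->|hjk] := eqVneq j k; first by rewrite ger0_norm ?diag_ge0 ?diag_le1.
set z := rho j k.
pose t := - Num.conj z.
have := (match hrho with And3 _ h _ => h end) (delta_mx j 0 + t *: delta_mx k 0).
rewrite braket_addv braketZ /braket !braket_delta -scalemxAr mxE braket_delta.
rewrite adjmxZ -!scalemxAl mxE braket_delta (herm j k) -/z /t !rmorphN /= conjCK.
rewrite mulrNN !mulNr (mulrC (Num.conj z) z) -normCK => h.
have hs0 : 0 <= `|z| ^+ 2 by rewrite exprn_ge0.
have h3 : rho j j + `|z| ^+ 2 * rho k k + - `|z| ^+ 2 + - `|z| ^+ 2 <= 1 - `|z| ^+ 2.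
  have -> : 1 - `|z| ^+ 2 = 1 + `|z| ^+ 2 + - `|z| ^+ 2 + - `|z| ^+ 2 by ring.
  by rewrite !lerD2r lerD ?diag_le1 // ler_piMr ?diag_le1.
have := le_trans h h3; rewrite subr_ge0 => h4.
by rewrite -(@expr_le1 _ 2).
Qed.
Lemma mn_rho : mn rho <= (d * d)%:R.
Proof.
rewrite /mn; apply: (@le_trans _ _ (\sum_(i < d) \sum_(j < d) (1 : R[i]))).
  by apply: ler_sum => i _; apply: ler_sum => j _; apply: entry_le1.
by rewrite !sumr_const !card_ord -mulrnA.
Qed.
End Dens.
Lemma lip (R : realType) (f : R -> R) (ut : R) : 0 <= ut -> C2 f ->
  exists L, 0 <= L /\ forall x, -ut <= x <= ut -> `|f x - f 0| <= L * `|x|.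
Proof.
move=> hut [hf1 hf2 _].
have hd : forall x : R, is_derive x 1 f (f^`()%classic x).
  move=> x; rewrite derive1E; exact: derivableP (hf1 x).
have cf' : {within `[-ut, ut], continuous (fun x => `|f^`()%classic x|)}%classic.
  apply: continuous_subspaceT => x.
  apply: (continuous_comp _ (@norm_continuous _ _ _)).
  exact: differentiable_continuous (proj1 (derivable1_diffP _ _) (hf2 x)).
have hle : -ut <= ut by rewrite (le_trans _ hut) // oppr_le0.
have [c hc hmax] := EVT_max hle cf'.
exists `|f^`()%classic c|; split => // x /andP[hx1 hx2].
have cf : forall a b, {within `[a, b], continuous f}%classic.
  move=> a b; apply: continuous_subspaceT => y.
  exact: differentiable_continuous (proj1 (derivable1_diffP _ _) (hf1 y)).
have [x0|xn0] := eqVneq x 0; first by rewrite x0 subrr normr0 mulr0.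
case: (ltgtP x 0) xn0 => // hx _.
- have [z hz hE] := MVT hx (fun y _ => hd y) (cf x 0).
  rewrite distrC hE normrM sub0r normrN ler_wpM2r //.
  apply: hmax; move: hz; rewrite !in_itv /= => /andP[h1 h2].
  by rewrite (le_trans hx1 (ltW h1)) (le_trans (ltW h2)).
- have [z hz ->] := MVT hx (fun y _ => hd y) (cf 0 x).
  rewrite normrM subr0 ler_wpM2r //.
  apply: hmax; move: hz; rewrite !in_itv /= => /andP[h1 h2].
  by rewrite (le_trans _ (ltW h1)) ?oppr_le0 // (le_trans (ltW h2)).
Qed.

Section Fin.
Variable R : realType.
Lemma fin_bound (T : finType) (P : T -> R -> Prop) :
  (forall t L L', P t L -> L <= L' -> P t L') ->
  (forall t, exists L, 0 <= L /\ P t L) -> exists L, 0 <= L /\ forall t, P t L.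
Proof.
move=> mono h; have [f hf] := choice h.
exists (\sum_t f t); split; first by apply: sumr_ge0 => t _; case: (hf t).
move=> t; apply: (mono t (f t)); first by case: (hf t).
rewrite (bigD1 t) //= lerDl; apply: sumr_ge0 => s _; by case: (hf s).
Qed.
Lemma ReB (u w : R[i]) : complex.Re (u - w) = complex.Re u - complex.Re w.
Proof. by case: u w => a b [c e]. Qed.
Lemma ImB (u w : R[i]) : complex.Im (u - w) = complex.Im u - complex.Im w.
Proof. by case: u w => a b [c e]. Qed.
Lemma norm_i : `|'i%C : R[i]| = 1.
Proof. by rewrite normc_def /= expr0n /= add0r expr1n sqrtr1. Qed.
Lemma lipC (F : R -> R[i]) (ut : R) : 0 <= ut ->
  C2 (fun u => complex.Re (F u)) -> C2 (fun u => complex.Im (F u)) ->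
  exists L : R, 0 <= L /\ forall x, -ut <= x <= ut -> `|F x - F 0| <= (L * `|x|)%:C.
Proof.
move=> hut h1 h2.
have [L1 [L1p H1]] := lip hut h1; have [L2 [L2p H2]] := lip hut h2.
exists (L1 + L2); split; first by rewrite addr_ge0.
move=> x hx; rewrite [F x - F 0]complexE ReB ImB.
apply: (le_trans (ler_normD _ _)); rewrite normrM norm_i mul1r !normRC mulrDl rmorphD /=.
by rewrite lerD // lecR; [apply: H1 | apply: H2].
Qed.
End Fin.
Lemma lipMx (R : realType) (d m : nat) (M : 'I_m -> R -> 'M[R[i]]_d) (ut : R) :
  0 <= ut -> (forall mu, C2mx (M mu)) ->
  exists L : R, 0 <= L /\ forall mu x, -ut <= x <= ut ->
    mn (M mu x - M mu 0) <= (L * `|x|)%:C.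
Proof.
move=> hut hA.
pose P := (fun (t : ('I_m * 'I_d * 'I_d)%type) L => forall x, -ut <= x <= ut ->
     `|M t.1.1 x t.1.2 t.2 - M t.1.1 0 t.1.2 t.2| <= (L * `|x|)%:C).
have mono : forall t L L', P t L -> L <= L' -> P t L'.
  move=> t L L' h hL x hx; apply: (le_trans (h x hx)).
  by rewrite lecR ler_wpM2r.
have hex : forall t, exists L, 0 <= L /\ P t L.
  case=> [[mu i] j] /=; have [h1 h2] := hA mu i j.
  exact: (lipC (F := fun u => M mu u i j) hut h1 h2).
have [L [L0 HL]] := fin_bound mono hex.
exists ((d * d)%:R * L); split; first by rewrite mulr_ge0.
move=> mu x hx; rewrite /mn.
apply: (@le_trans _ _ (\sum_(i < d) \sum_(j < d) (L * `|x|)%:C)).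
  apply: ler_sum => i _; apply: ler_sum => j _; rewrite !mxE.
  exact: (HL (mu, i, j) x hx).
rewrite !sumr_const !card_ord -mulrnA -rmorphMn /= lecR.
by rewrite mulrnAl mul1r mulrnAl.
Qed.
Section Arith.
Variable R : realType.
Lemma fin_min (T : finType) (P : pred T) (f : T -> R) :
  (forall t, P t -> 0 < f t) -> exists δ, 0 < δ /\ forall t, P t -> δ <= f t.
Proof.
move=> hf; exists (\big[Num.min/1]_(t | P t) f t); split.
  by apply: (big_ind (fun x => 0 < x)) => // x y hx hy; rewrite lt_min hx hy.
by move=> t Pt; rewrite (bigD1 t) //= ge_min lexx.
Qed.

Lemma final_arith d m (q : 'I_d -> R) (A al : 'I_m -> 'I_d -> R) (e δ : R) :
  (forall k, 0 <= q k) -> \sum_k q k = 1 ->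
  (forall mu k, 0 <= A mu k <= 1) -> (forall k, \sum_mu al mu k = 1) ->
  (forall mu k, `|A mu k - al mu k * q k| <= e) ->
  (forall mu k k', A mu k * \sum_nu A nu k' = A mu k' * \sum_nu A nu k) ->
  0 < δ -> (forall k k', k != k' -> δ <= \sum_mu `|al mu k - al mu k'|) ->
  exists n, 1 - (2 * (d * d * m * (1 + m))%:R) / δ * e <= q n.
Proof.
move=> q0 qs A01 als hA hid δ0 hδ.
have q1 : forall k, q k <= 1.
  move=> k; rewrite -qs (bigD1 k) //= lerDl; exact: sumr_ge0.
have [ns hns] : exists ns, 1 <= d%:R * q ns.
  have hd : (0 < d)%N.
    rewrite lt0n; apply/eqP => d0; move: qs; rewrite big_pred0.
      by move/eqP; rewrite eq_sym oner_eq0.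
    by case=> k; rewrite d0.
  apply/not_existsP => hn.
  have : \sum_(k < d) d%:R * q k < \sum_(k < d) 1.
    apply: ltr_sum; first by apply/hasP; exists (Ordinal hd); rewrite ?mem_index_enum.
    by move=> k _; rewrite ltNge; apply/negP => /(fun h => hn k h).
  by rewrite -mulr_sumr qs mulr1 sumr_const card_ord ltxx.
have hm : (0 < m)%N.
  case: m A al A01 als hA hid hδ => // A al _ als.
  by have := als ns; rewrite big_ord0 => /eqP; rewrite eq_sym oner_eq0.
have e0 : 0 <= e.
  exact: le_trans (normr_ge0 _) (hA (Ordinal hm) ns).
have hr : forall k, `|\sum_nu A nu k - q k| <= m%:R * e.
  move=> k.
  have -> : q k = \sum_nu al nu k * q k by rewrite -mulr_suml als mul1r.
  rewrite -sumrB; apply: (le_trans (ler_norm_sum _ _ _)).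
  apply: (@le_trans _ _ (\sum_(nu < m) e)); first by apply: ler_sum => nu _; apply: hA.
  by rewrite sumr_const card_ord mulr_natl.
have hpair : forall k mu, `|q k * q ns * (al mu k - al mu ns)| <= 2 * (1 + m%:R) * e.
  move=> k mu.
  set x := A mu k; set y := A mu ns; set rk := \sum_nu A nu k; set rs := \sum_nu A nu ns.
  have E : q k * q ns * (al mu k - al mu ns) =
     (al mu k * q k - x) * q ns + x * (q ns - rs) - (al mu ns * q ns - y) * q k
     - y * (q k - rk) + (x * rs - y * rk) by ring.
  have hxy : x * rs - y * rk = 0 by rewrite /x /y /rk /rs hid subrr.
  rewrite E hxy addr0.
  have b1 : `|(al mu k * q k - x) * q ns| <= e.
    rewrite normrM (ger0_norm (q0 ns)) -[e]mulr1 ler_pM //.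
    by rewrite distrC; apply: hA.
  have b2 : `|x * (q ns - rs)| <= m%:R * e.
    rewrite normrM [`|q ns - _|]distrC -[_ * e]mul1r ler_pM //.
      by rewrite ger0_norm; case/andP: (A01 mu k).
    exact: hr.
  have b3 : `|(al mu ns * q ns - y) * q k| <= e.
    rewrite normrM (ger0_norm (q0 k)) -[e]mulr1 ler_pM //.
    by rewrite distrC; apply: hA.
  have b4 : `|y * (q k - rk)| <= m%:R * e.
    rewrite normrM [`|q k - _|]distrC -[_ * e]mul1r ler_pM //.
      by rewrite ger0_norm; case/andP: (A01 mu ns).
    exact: hr.
  have -> : 2 * (1 + m%:R) * e = e + m%:R * e + e + m%:R * e by ring.
  apply: (le_trans (ler_normB _ _)); rewrite lerD //.
  apply: (le_trans (ler_normB _ _)); rewrite lerD //.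
  by apply: (le_trans (ler_normD _ _)); rewrite lerD.
set B := 2 * (d * m * (1 + m))%:R / δ * e.
have B0 : 0 <= B by rewrite /B !mulr_ge0 // invr_ge0 ltW.
have hk : forall k, k != ns -> q k <= B.
  move=> k hk.
  have h1 : q k * q ns * δ <= m%:R * (2 * (1 + m%:R) * e).
    apply: (@le_trans _ _ (\sum_mu `|q k * q ns * (al mu k - al mu ns)|)).
      rewrite (eq_bigr (fun mu => q k * q ns * `|al mu k - al mu ns|)); last first.
        by move=> mu _; rewrite normrM ger0_norm // mulr_ge0.
      by rewrite -mulr_sumr ler_wpM2l ?mulr_ge0 // hδ // eq_sym.
    apply: (@le_trans _ _ (\sum_(mu < m) (2 * (1 + m%:R) * e))).
      by apply: ler_sum => mu _; apply: hpair.
    by rewrite sumr_const card_ord [m%:R * _]mulr_natl.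
  have h2 : q k * δ <= d%:R * (m%:R * (2 * (1 + m%:R) * e)).
    apply: (@le_trans _ _ (d%:R * (q k * q ns * δ))); last first.
      by rewrite ler_wpM2l.
    have -> : d%:R * (q k * q ns * δ) = q k * δ * (d%:R * q ns) by ring.
    by rewrite ler_peMr // mulr_ge0 // ltW.
  have -> : B = 2 * (d * m * (1 + m))%:R * e / δ by rewrite /B; ring.
  rewrite ler_pdivlMr //; apply: (le_trans h2).
  by rewrite le_eqVlt; apply/orP; left; apply/eqP; rewrite !natrM !natrD; ring.
exists ns.
have hsum : \sum_(k < d | k != ns) q k <= d%:R * B.
  apply: (@le_trans _ _ (\sum_(k < d | k != ns) B)); first by apply: ler_sum => k; apply: hk.
  apply: (@le_trans _ _ (\sum_(k < d) B)).
    by rewrite [X in _ <= X](bigD1 ns) //= lerDr.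
  by rewrite sumr_const card_ord mulr_natl.
have hq : q ns + \sum_(k < d | k != ns) q k = 1 by rewrite -qs [RHS](bigD1 ns).
have : 1 <= q ns + d%:R * B by rewrite -[X in X <= _]hq lerD2l.
have -> : d%:R * B = 2 * (d * d * m * (1 + m))%:R / δ * e by rewrite /B !natrM; ring.
by rewrite -lerBlDr.
Qed.
End Arith.
Section Pert.
Variable R : realType.
Lemma mxBE p q (A B : 'M[R[i]]_(p,q)) i j : (A - B) i j = A i j - B i j.
Proof. by rewrite !mxE. Qed.
Lemma mxDE p q (A B : 'M[R[i]]_(p,q)) i j : (A + B) i j = A i j + B i j.
Proof. by rewrite !mxE. Qed.
Lemma braket_pert d (v w : 'cV[R[i]]_d) X :
  `|braket v X - braket w X| <= mn (v - w) * mn X * (mn v + mn w).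
Proof.
have E : braket v X - braket w X = (adjmx (v - w) *m X *m v + adjmx w *m X *m (v - w)) 0 0.
  rewrite /braket adjmxB !mulmxBl mulmxBr addrA subrK mxBE //.
rewrite E; apply: (le_trans (mn_entry _ _ _)); apply: (le_trans (mnD _ _)).
rewrite mulrDr lerD //.
  apply: (le_trans (mnM _ _)); rewrite ler_wpM2r ?mn_ge0 //.
  by apply: (le_trans (mnM _ _)); rewrite mn_adj.
have -> : mn (v - w) * mn X * mn w = (mn w * mn X) * mn (v - w) by ring.
apply: (le_trans (mnM _ _)); rewrite ler_wpM2r ?mn_ge0 //.
by apply: (le_trans (mnM _ _)); rewrite mn_adj.
Qed.
Lemma mn_col d (U : 'M[R[i]]_d) n : mn (col n U) <= mn U.
Proof.
rewrite /mn; apply: ler_sum => i _; rewrite big_ord1 mxE (bigD1 n) //= lerDl.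
by apply: sumr_ge0.
Qed.
Lemma ge0_RC (z : R[i]) : 0 <= z -> (complex.Re z)%:C = z.
Proof. by move=> hz; rewrite [RHS]complexE (ger0_Im hz) mulr0 addr0. Qed.
End Pert.

Unset Implicit Arguments.
Lemma tr_sum (R : realType) d m (F : 'I_m -> 'M[R[i]]_d) : \tr (\sum_mu F mu) = \sum_mu \tr (F mu).
Proof.
elim/big_ind2: _ => //; first by rewrite /mxtrace big1 // => i _; rewrite mxE.
by move=> A a B b <- <-; rewrite mxtraceD.
Qed.

Theorem lemma3 (R : realType) (d m : nat)
  (M : 'I_m -> R -> 'M[R[i]]_d)
  (U : 'M[R[i]]_d) (c : 'I_m -> 'I_d -> R[i])
  (hU : adjmx U *m U = 1%:M)
  (hsum : forall u : R, \sum_(mu < m) adjmx (M mu u) *m M mu u = 1%:M)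
  (hA1 : forall mu, M mu 0 = \sum_(n < d) c mu n *: (col n U *m adjmx (col n U)))
  (hA2 : forall n1 n2 : 'I_d, n1 != n2 ->
           exists mu, `|c mu n1| ^+ 2 != `|c mu n2| ^+ 2)
  (hA3 : forall mu, C2mx (M mu))
  (ut : R) (hut : 0 < ut) :
  exists C : R, 0 < C /\
    forall (rho : 'M[R[i]]_d) (beta : R),
      density rho -> - ut <= beta <= ut -> Q1 U M rho beta = 0 ->
      exists n : 'I_d, ((1 - C * `|beta|)%:C <= braket (col n U) rho).
Proof.
have hut0 : 0 <= ut := ltW hut.
have [L [L0 HL]] := lipMx hut0 hA3.
set SU := mn U.
set SD := \sum_mu mn (M mu 0).
have SU0 : 0 <= SU by apply: mn_ge0.
have SD0 : 0 <= SD by apply: sumr_ge0 => mu _; apply: mn_ge0.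
set KC : R[i] := L%:C * SU * (d * d)%:R * ((SD + (L * ut)%:C) * SU + SD * SU).
have KC0 : 0 <= KC.
  have hL : 0 <= L%:C by rewrite ler0c.
  have hLu : 0 <= (L * ut)%:C by rewrite ler0c mulr_ge0.
  rewrite /KC; apply: mulr_ge0; first by rewrite !mulr_ge0 // ler0n.
  by rewrite addr_ge0 // mulr_ge0 // addr_ge0.
set K := complex.Re KC.
have KCE : K%:C = KC := ge0_RC KC0.
have K0 : 0 <= K by rewrite -ler0c KCE.
set al := fun mu n => complex.Re (`|c mu n| ^+ 2).
have alE : forall mu n, (al mu n)%:C = `|c mu n| ^+ 2.
  by move=> mu n; apply: ge0_RC; rewrite exprn_ge0.
have Dcol : forall mu n, M mu 0 *m col n U = c mu n *: col n U.
  by move=> mu n; rewrite hA1; apply: D_col.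
have Dadjcol : forall mu n, adjmx (M mu 0) *m col n U = Num.conj (c mu n) *: col n U.
  by move=> mu n; rewrite hA1; apply: Dadj_col.
have als : forall n, \sum_mu al mu n = 1.
  move=> n; apply: complexI; rewrite rmorph_sum rmorph1 /=.
  under eq_bigr do rewrite alE.
  have := congr1 (braket (col n U)) (hsum 0); rewrite braket_col1 // braket_sum => <-.
  apply: eq_bigr => mu _.
  have -> : adjmx (M mu 0) *m M mu 0 = adjmx (M mu 0) *m 1%:M *m adjmx (adjmx (M mu 0)).
    by rewrite mulmx1 adjmxK.
  rewrite braket_conj adjmxK.
  by rewrite Dcol braketZ braket_col1 // mulr1 normCK mulrC.
have [δ [δ0 hδ]] : exists δ, 0 < δ /\ forall k k', k != k' -> δ <= \sum_mu `|al mu k - al mu k'|.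
  have hpos : forall t : 'I_d * 'I_d, t.1 != t.2 -> 0 < \sum_mu `|al mu t.1 - al mu t.2|.
    case=> k k' /= hk; have [mu hmu] := hA2 k k' hk.
    apply: (@lt_le_trans _ _ `|al mu k - al mu k'|).
      rewrite normr_gt0 subr_eq0; apply: contra hmu => /eqP h.
      by rewrite -!alE h.
    by rewrite (bigD1 mu) //= lerDl; apply: sumr_ge0.
  have [δ [δ0 hδ]] := fin_min hpos.
  by exists δ; split => // k k' hk; apply: (hδ (k, k')).
exists (2 * (d * d * m * (1 + m))%:R / δ * K + 1); split.
  by rewrite ltr_pwDr // !mulr_ge0 // invr_ge0 ltW.
move=> rho beta hrho hb hQ.
have hpos_rho : forall v, 0 <= braket v rho by case: hrho.
set a := fun mu n => amp U M rho beta mu n.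
set p := fun mu => pr M rho beta mu.
have aE : forall mu n, a mu n = braket (adjmx (M mu beta) *m col n U) rho.
  by move=> mu n; rewrite /a /amp braket_conj.
have a0 : forall mu n, 0 <= a mu n by move=> mu n; rewrite aE.
have pE : forall mu, p mu = \sum_n a mu n by move=> mu; rewrite /p /pr (trace_braket hU).
have p0 : forall mu, 0 <= p mu by move=> mu; rewrite pE; apply: sumr_ge0.
have ale : forall mu n, a mu n <= p mu.
  by move=> mu n; rewrite pE (bigD1 n) //= lerDl; apply: sumr_ge0.
have psum : \sum_mu p mu = 1.
  transitivity (\tr (\sum_mu adjmx (M mu beta) *m M mu beta *m rho)).
    rewrite tr_sum; apply: eq_bigr => mu _.
    by rewrite /p /pr mxtrace_mulC !mulmxA.
  by rewrite -mulmx_suml hsum mul1mx; case: hrho.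
have ple1 : forall mu, p mu <= 1.
  by move=> mu; rewrite -psum (bigD1 mu) //= lerDl; apply: sumr_ge0.
set T := fun n mu nu => (p mu * p nu / 4) * (a mu n / p mu - a nu n / p nu) ^+ 2.
have hQ' : \sum_n \sum_mu \sum_(nu | 0 < p mu * p nu) T n mu nu = 0 by exact: hQ.
have T0 : forall n mu nu, 0 < p mu * p nu -> 0 <= T n mu nu.
  move=> n mu nu h; apply: mulr_ge0; first by rewrite divr_ge0 ?ltW ?ler0n.
  by rewrite -realEsqr rpredB // rpred_div // ger0_real.
have h1 : forall n, \sum_mu \sum_(nu | 0 < p mu * p nu) T n mu nu = 0.
  move=> n; apply: (psumr_eq0P _ hQ') => // k _.
  by apply: sumr_ge0 => mu _; apply: sumr_ge0 => nu h; apply: T0.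
have h2 : forall n mu, \sum_(nu | 0 < p mu * p nu) T n mu nu = 0.
  move=> n mu; apply: (psumr_eq0P _ (h1 n)) => // mu' _.
  by apply: sumr_ge0 => nu h; apply: T0.
have h3 : forall n mu nu, 0 < p mu * p nu -> T n mu nu = 0.
  by move=> n mu; apply: (psumr_eq0P _ (h2 n mu)) => nu h; apply: T0.
have pz : forall mu n, p mu = 0 -> a mu n = 0.
  by move=> mu n hp; apply/le_anti; rewrite a0 -hp ale.
have hrel : forall mu nu n, a mu n * p nu = a nu n * p mu.
  move=> mu nu n; case: (boolP (0 < p mu * p nu)) => h.
    have hmu : p mu != 0 by apply: contraTneq h => ->; rewrite mul0r ltxx.
    have hnu : p nu != 0 by apply: contraTneq h => ->; rewrite mulr0 ltxx.
    have /eqP := h3 n mu nu h; rewrite /T mulf_eq0 => /orP [|].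
      by rewrite gt_eqF // divr_gt0 // ltr0n.
    by rewrite expf_eq0 /= subr_eq0 eqr_div // => /eqP.
  have : p mu * p nu = 0.
    by apply/eqP; move: h; rewrite lt_def mulr_ge0 // andbT negbK eq_sym.
  move/eqP; rewrite mulf_eq0 => /orP [] /eqP hp.
    by rewrite (pz _ _ hp) hp !mul0r mulr0.
  by rewrite (pz _ _ hp) hp !mul0r mulr0.
have hprod : forall mu n, a mu n = p mu * \sum_nu a nu n.
  move=> mu n; rewrite -[LHS]mulr1 -psum !mulr_sumr.
  by apply: eq_bigr => nu _; rewrite hrel mulrC.
have hid : forall mu k k', a mu k * \sum_nu a nu k' = a mu k' * \sum_nu a nu k.
  by move=> mu k k'; rewrite (hprod mu k) (hprod mu k') mulrAC.
set A := fun mu n => complex.Re (a mu n).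
have AE : forall mu n, (A mu n)%:C = a mu n by move=> mu n; apply: ge0_RC.
set q := fun n => complex.Re (braket (col n U) rho).
have qE : forall n, (q n)%:C = braket (col n U) rho by move=> n; apply: ge0_RC.
have q0 : forall k, 0 <= q k by move=> k; rewrite -ler0c qE.
have qs : \sum_k q k = 1.
  apply: complexI; rewrite rmorph_sum rmorph1 /=; under eq_bigr do rewrite qE.
  by rewrite -trace_braket //; case: hrho.
have A01 : forall mu k, 0 <= A mu k <= 1.
  move=> mu k; rewrite -ler0c -lecR AE a0 /=.
  by rewrite rmorph1 (le_trans (ale mu k)).
have hidR : forall mu k k', A mu k * \sum_nu A nu k' = A mu k' * \sum_nu A nu k.
  move=> mu k k'; apply: complexI; rewrite !rmorphM !rmorph_sum /=.
  under eq_bigr do rewrite AE.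
  under [in RHS]eq_bigr do rewrite AE.
  by rewrite !AE hid.
have hb' : `|beta| <= ut.
  by case/andP: hb => hb1 hb2; rewrite ler_norml hb1 hb2.
have hAb : forall mu k, `|A mu k - al mu k * q k| <= K * `|beta|.
  move=> mu k; rewrite -lecR -normRC rmorphB rmorphM /= AE alE qE rmorphM /= KCE.
  set v := adjmx (M mu beta) *m col k U.
  set w := adjmx (M mu 0) *m col k U.
  have a0E : `|c mu k| ^+ 2 * braket (col k U) rho = braket w rho.
    by rewrite /w Dadjcol braketZ conjCK normCK.
  rewrite a0E aE -/v; apply: (le_trans (braket_pert _ _ _)).
  have hND : mn (M mu beta - M mu 0) <= (L * `|beta|)%:C by apply: HL.
  have hcol : mn (col k U) <= SU by apply: mn_col.
  have hD : mn (M mu 0) <= SD.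
    by rewrite /SD (bigD1 mu) //= lerDl; apply: sumr_ge0 => ? _; apply: mn_ge0.
  have hvw : mn (v - w) <= (L * `|beta|)%:C * SU.
    rewrite /v /w -mulmxBl -adjmxB; apply: (le_trans (mnM _ _)).
    by rewrite mn_adj ler_pM ?mn_ge0.
  have hv : mn v <= (SD + (L * ut)%:C) * SU.
    rewrite /v; apply: (le_trans (mnM _ _)); rewrite mn_adj ler_pM ?mn_ge0 //.
    rewrite -[M mu beta](subrK (M mu 0)); apply: (le_trans (mnD _ _)).
    rewrite addrC lerD //; apply: (le_trans hND).
    by rewrite lecR ler_wpM2l.
  have hw : mn w <= SD * SU.
    by rewrite /w; apply: (le_trans (mnM _ _)); rewrite mn_adj ler_pM ?mn_ge0.
  apply: (@le_trans _ _ ((L * `|beta|)%:C * SU * (d * d)%:R * ((SD + (L * ut)%:C) * SU + SD * SU))).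
    apply: ler_pM; rewrite ?addr_ge0 ?mulr_ge0 ?mn_ge0 ?lerD //.
    by apply: ler_pM; rewrite ?mn_ge0 // mn_rho.
  by rewrite /KC !rmorphM /= le_eqVlt; apply/orP; left; apply/eqP; ring.
have [n hn] := final_arith q0 qs A01 als hAb hidR δ0 hδ.
exists n; rewrite -qE lecR; apply: le_trans hn.
set X := 2 * (d * d * m * (1 + m))%:R / δ.
have -> : (X * K + 1) * `|beta| = X * (K * `|beta|) + `|beta| by ring.
by rewrite opprD addrA gerDl oppr_le0.
Qed.
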